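(* Let $\gamma$ denote the Euler–Mascheroni constant, $\gamma=\lim_{n\to\infty}\left(\sum_{m=1}^{n}\frac1m-\ln n\right)$. Define the rational numbers $a_1=\frac12$, $a_2=\frac16$, $a_4=\frac35$, $a_6=\frac{79}{126}$, $a_8=\frac{7230}{6241}$, $a_{10}=\frac{4146631}{3833346}$, $a_{12}=\frac{306232774533}{179081182865}$, and $a_{2k+1}=-a_{2k}$ for $1\le k\le 6$ (so $a_3=-\frac16$, $a_5=-\frac35$, \dots, $a_{13}=-\frac{306232774533}{179081182865}$). For a positive integer $n$ define $R_1(n)=\frac{a_1}{n}$ and, for $2\le k\le 13$, the finite continued fraction $$R_k(n)=\cfrac{a_1}{n+\cfrac{a_2 n}{n+\cfrac{a_3 n}{n+\cfrac{\ddots}{n+\cfrac{a_{k-1}n}{n+a_k}}}}},$$ i.e. $R_k(n)=a_1/T_2$ where $T_k=n+a_k$ and $T_j=n+\frac{a_j n}{T_{j+1}}$ for $2\le j\le k-1$. Let $$r_k(n)=\sum_{m=1}^{n}\frac1m-\ln n-R_k(n).$$ Then for every $1\le k\le 13$, $$\lim_{n\to\infty} n^{k+1}\bigl(r_k(n)-\gamma\bigr)=C_k,$$ where $(C_1,\dots,C_{13})=\Bigl(-\frac{1}{12},-\frac{1}{72},\frac{1}{120},\frac{1}{200},-\frac{79}{25200},-\frac{6241}{3175200},\frac{241}{105840},\frac{58081}{22018248},-\frac{262445}{91974960},-\frac{2755095121}{892586949408},\frac{20169451}{3821257440},\frac{406806753641401}{45071152103463200},-\frac{71521421431}{5152068292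800}\Bigr)$.
   Context: $\gamma$ is the Euler–Mascheroni constant. The continued fraction $R_k(n)$ terminates with the denominator $n+a_k$ (not $n+a_kn/\cdots$); for example $R_2(n)=\frac{a_1}{n+a_2}=\frac{3}{6n+1}$ and $R_3(n)=\frac{1}{2n}-\frac{1}{12n^2}$. *)

(* Defs.v *)
From Stdlib Require Import Reals.
From Coquelicot Require Import Coquelicot.
Open Scope R_scope.

Fixpoint harmonic (n : nat) : R :=
  match n with
  | O => 0
  | S p => harmonic p + / INR (S p)
  end.

Definition acoef (j : nat) : R :=
  match j with
  | 1%nat => 1/2
  | 2%nat => 1/6
  | 3%nat => - (1/6)
  | 4%nat => 3/5
  | 5%nat => - (3/5)
  | 6%nat => 79/126
  | 7%nat => - (79/126)
  | 8%nat => 7230/6241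
  | 9%nat => - (7230/6241)
  | 10%nat => 4146631/3833346
  | 11%nat => - (4146631/3833346)
  | 12%nat => 306232774533/179081182865
  | 13%nat => - (306232774533/179081182865)
  | _ => 0
  end.

(* cf_tail x m j = T_j for the continued fraction ending at index k = j + m:
   T_k = x + a_k,  T_j = x + a_j x / T_{j+1}. *)
Fixpoint cf_tail (x : R) (m j : nat) : R :=
  match m with
  | O => x + acoef j
  | S m' => x + acoef j * x / cf_tail x m' (S j)
  end.

Definition Rk (k n : nat) : R :=
  match k with
  | O => 0
  | 1%nat => acoef 1 / INR n
  | S (S k') => acoef 1 / cf_tail (INR n) k' 2
  end.

Definition rk (k n : nat) : R := harmonic n - ln (INR n) - Rk k n.

Definition Ccoef (k : nat) : R :=
  match k with
  | 1%nat => - (1/12)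
  | 2%nat => - (1/72)
  | 3%nat => 1/120
  | 4%nat => 1/200
  | 5%nat => - (79/25200)
  | 6%nat => - (6241/3175200)
  | 7%nat => 241/105840
  | 8%nat => 58081/22018248
  | 9%nat => - (262445/91974960)
  | 10%nat => - (2755095121/892586949408)
  | 11%nat => 20169451/3821257440
  | 12%nat => 406806753641401/45071152103463200
  | 13%nat => - (71521421431/5152068292800)
  | _ => 0
  end.

(* Main.v *)
Require Import Defs.
From Stdlib Require Import Reals Lra Lia List QArith Qreals.
From Coquelicot Require Import Coquelicot.
Import ListNotations.
Open Scope R_scope.

Fixpoint peval (l : list R) (x : R) : R :=
  match l with nil => 0 | c :: l' => c + x * peval l' x end.
Fixpoint pabs (l : list R) : R :=
  match l with nil => 0 | c :: l' => Rabs c + pabs l' end.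

Fixpoint pp (x : R) (m j : nat) : R :=
  match m with
  | O => 1
  | S O => 1 + acoef j * x
  | S (S m'' as m') => pp x m' (S j) + acoef j * x * pp x m'' (S (S j))
  end.

Definition Pk (k : nat) (x : R) : R :=
  match k with S (S k') => pp x (S k') 2 | _ => 1 end.
Definition Qk (k : nat) (x : R) : R :=
  match k with S (S k') => pp x k' 3 | _ => 1 end.

Definition StailQ : list Q := [(1#2)%Q; (-1#12)%Q; (0#1)%Q; (1#120)%Q; (0#1)%Q; (-1#252)%Q; (0#1)%Q; (1#240)%Q; (0#1)%Q; (-1#132)%Q; (0#1)%Q; (691#32760)%Q; (0#1)%Q; (-1#12)%Q].
Definition Wl : list R := [0; (211/30); (6883/180); (32609/315); (89245/504); (26885/132); (67073/440); (9176/165); (-(179203/7920)); (-(498629/10296)); (-(474889/13104)); (-(12823/780)); (-(7967/1680)); (-(97/120)); (-(1/16))].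
Definition MlQ (k : nat) : list Q :=
  match k with
  | 1%nat => [(0#1)%Q; (1#120)%Q; (0#1)%Q; (-1#252)%Q; (0#1)%Q; (1#240)%Q; (0#1)%Q; (-1#132)%Q; (0#1)%Q; (691#32760)%Q; (0#1)%Q; (-1#12)%Q]
  | 2%nat => [(23#2160)%Q; (1#720)%Q; (-1#252)%Q; (-1#1512)%Q; (1#240)%Q; (1#1440)%Q; (-1#132)%Q; (-1#792)%Q; (691#32760)%Q; (691#196560)%Q; (-1#12)%Q; (-1#72)%Q]
  | 3%nat => [(0#1)%Q; (-1#252)%Q; (0#1)%Q; (1#240)%Q; (0#1)%Q; (-1#132)%Q; (0#1)%Q; (691#32760)%Q; (0#1)%Q; (-1#12)%Q]
  | 4%nat => [(-773#126000)%Q; (-121#42000)%Q; (19#5040)%Q; (1#400)%Q; (-63#8800)%Q; (-1#220)%Q; (916#45045)%Q; (691#54600)%Q; (-26609#327600)%Q; (-1#20)%Q; (-1#120)%Q]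
  | 5%nat => [(0#1)%Q; (49#12000)%Q; (0#1)%Q; (-63#8800)%Q; (0#1)%Q; (916#45045)%Q; (0#1)%Q; (-26609#327600)%Q; (0#1)%Q; (-1#120)%Q]
  | 6%nat => [(1404019#400075200)%Q; (44003#13335840)%Q; (-240654571#44008272000)%Q; (-79#17600)%Q; (6301#360360)%Q; (36182#2837835)%Q; (-2521#34398)%Q; (-2102111#41277600)%Q; (-5#126)%Q; (-79#15120)%Q]
  | 7%nat => [(0#1)%Q; (-8161#1222452)%Q; (0#1)%Q; (6301#360360)%Q; (0#1)%Q; (-2521#34398)%Q; (0#1)%Q; (-5#126)%Q]
  | 8%nat => [(-53594215651#9069448460688)%Q; (-184638535#19133857512)%Q; (9931506048623#917022011025120)%Q; (209616154093#10447086201552)%Q; (-83297#1423422)%Q; (-3037805#35779653)%Q; (-10726169#108697680)%Q; (-6025#131061)%Q; (-241#39816)%Q]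
  | 9%nat => [(0#1)%Q; (269922301#17174233440)%Q; (0#1)%Q; (-4206118081#72131780448)%Q; (0#1)%Q; (-10726169#108697680)%Q; (0#1)%Q; (-241#39816)%Q]
  | 10%nat => [(1916479765709655233#222403649790748345920)%Q; (101898645840727#4882733974198080)%Q; (-1449719911049914717#44480729958149669184)%Q; (-59799094372697#976546794839616)%Q; (-567309678354514219#2981472483629566080)%Q; (-563005884641#5274377428320)%Q; (-1183#21208)%Q; (-52489#8016624)%Q]
  | 11%nat => [(0#1)%Q; (-183934031#3710678928)%Q; (0#1)%Q; (-4800479537#24737859520)%Q; (0#1)%Q; (-1183#21208)%Q]
  | 12%nat => [(-1419751865027568580392953933#48428371390659136313988408000)%Q; (-31203526868024427314559#307546161358628387624000)%Q; (-1494566500220839185616353019#4439267377477087495448937400)%Q; (-23810545096485724006437#67660155498898245277280)%Q; (-213968614262791224245572505897#860534907018635422194717096000)%Q; (-653591360243333521368451#6766015549889824527728000)%Q; (-20169451#1801422480)%Q]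
  | 13%nat => [(0#1)%Q; (-2800709205666156357#11718499546900432000)%Q; (0#1)%Q; (-32182063564309788953#162418403720039987520)%Q; (0#1)%Q; (-2405661536673566673#257806990031809504000)%Q]
  | _ => nil
  end.
Definition qa (j : nat) : Q :=
  match j with
  | 1%nat => (1#2)%Q
  | 2%nat => (1#6)%Q
  | 3%nat => (-1#6)%Q
  | 4%nat => (3#5)%Q
  | 5%nat => (-3#5)%Q
  | 6%nat => (79#126)%Q
  | 7%nat => (-79#126)%Q
  | 8%nat => (7230#6241)%Q
  | 9%nat => (-7230#6241)%Q
  | 10%nat => (4146631#3833346)%Q
  | 11%nat => (-4146631#3833346)%Q
  | 12%nat => (306232774533#179081182865)%Q
  | 13%nat => (-306232774533#179081182865)%Q
  | _ => 0%Q
  end.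
Definition qC (k : nat) : Q :=
  match k with
  | 1%nat => (-1#12)%Q
  | 2%nat => (-1#72)%Q
  | 3%nat => (1#120)%Q
  | 4%nat => (1#200)%Q
  | 5%nat => (-79#25200)%Q
  | 6%nat => (-6241#3175200)%Q
  | 7%nat => (241#105840)%Q
  | 8%nat => (58081#22018248)%Q
  | 9%nat => (-52489#18394992)%Q
  | 10%nat => (-2755095121#892586949408)%Q
  | 11%nat => (20169451#3821257440)%Q
  | 12%nat => (406806753641401#45071152103463200)%Q
  | 13%nat => (-71521421431#5152068292800)%Q
  | _ => 0%Q
  end.

Definition Stail : list R := map Q2R StailQ.
Definition Ml (k : nat) : list R := map Q2R (MlQ k).

Fixpoint padd (p q : list Q) : list Q :=
  match p, q with
  | nil, _ => q
  | _, nil => p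
  | a :: p', b :: q' => Qred (a + b)%Q :: padd p' q'
  end.
Definition pscale (c : Q) (p : list Q) : list Q := map (fun a => Qred (c * a)) p.
Fixpoint pmul (p q : list Q) : list Q :=
  match p with
  | nil => nil
  | a :: p' => padd (pscale a q) (0%Q :: pmul p' q)
  end.
Fixpoint xpow (n : nat) : list Q :=
  match n with O => [1%Q] | S n' => 0%Q :: xpow n' end.
Definition pequiv (p q : list Q) : bool :=
  forallb (fun a => Qeq_bool a 0) (padd p (pscale (-1) q)).

Fixpoint evQ (p : list Q) (x : R) : R :=
  match p with nil => 0 | a :: p' => Q2R a + x * evQ p' x end.

Lemma Q2R0 : Q2R 0 = 0.
Proof. unfold Q2R; simpl. field. Qed.

Lemma Q2R_Qred q : Q2R (Qred q) = Q2R q.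
Proof. apply Qeq_eqR, Qred_correct. Qed.

Lemma Q2R1 : Q2R 1 = 1.
Proof. unfold Q2R; simpl. field. Qed.

Lemma evQ_padd p q x : evQ (padd p q) x = evQ p x + evQ q x.
Proof.
  revert q; induction p as [|a p IH]; intros q; cbn [padd evQ]. ring.
  destruct q as [|b q]; cbn [padd evQ]. ring. rewrite IH, Q2R_Qred, Q2R_plus. ring.
Qed.

Lemma evQ_pscale c p x : evQ (pscale c p) x = Q2R c * evQ p x.
Proof. induction p as [|a p IH]; cbn [pscale map evQ]. ring. unfold pscale in IH. rewrite IH, Q2R_Qred, Q2R_mult. ring. Qed.

Lemma evQ_pmul p q x : evQ (pmul p q) x = evQ p x * evQ q x.
Proof.
  induction p as [|a p IH]; simpl. ring.
  rewrite evQ_padd, evQ_pscale. simpl. rewrite IH, Q2R0. ring.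
Qed.

Lemma evQ_xpow n x : evQ (xpow n) x = x ^ n.
Proof.
  induction n as [|n IH]; simpl. unfold Q2R; simpl; field. rewrite IH, Q2R0. ring.
Qed.

Lemma evQ_zero p x : forallb (fun a => Qeq_bool a 0) p = true -> evQ p x = 0.
Proof.
  induction p as [|a p IH]; simpl. auto.
  intros H. apply andb_true_iff in H. destruct H as [H1 H2].
  rewrite IH by exact H2. apply Qeq_bool_eq in H1. apply Qeq_eqR in H1.
  rewrite H1, Q2R0. ring.
Qed.

Lemma pequiv_sound p q x : pequiv p q = true -> evQ p x = evQ q x.
Proof.
  intros H. apply (evQ_zero _ x) in H. rewrite evQ_padd, evQ_pscale in H.
  assert (Q2R (-1) = -1) by (unfold Q2R; simpl; field). lra.
Qed.

Lemma peval_map l x : peval (map Q2R l) x = evQ l x.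
Proof. induction l as [|a l IH]; simpl; [reflexivity|]. rewrite IH. reflexivity. Qed.

Lemma acoef_qa j : acoef j = Q2R (qa j).
Proof.
  do 14 (destruct j as [|j]; [unfold Q2R; cbn [acoef qa Qnum Qden]; field|]).
  unfold Q2R; cbn [acoef qa Qnum Qden]; field.
Qed.

Fixpoint ppQ (m j : nat) : list Q :=
  match m with
  | O => [1%Q]
  | S O => [1%Q; qa j]
  | S (S m'' as m') => padd (ppQ m' (S j)) (pmul [0%Q; qa j] (ppQ m'' (S (S j))))
  end.

Lemma pp_evQ2 x m : (forall j, pp x m j = evQ (ppQ m j) x) /\ (forall j, pp x (S m) j = evQ (ppQ (S m) j) x).
Proof.
  induction m as [|m [IH1 IH2]].
  - split; intros j.
    + simpl. unfold Q2R; simpl; field.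
    + simpl. rewrite acoef_qa, Q2R1. ring.
  - split; [exact IH2|]. intros j.
    change (pp x (S (S m)) j) with (pp x (S m) (S j) + acoef j * x * pp x m (S (S j))).
    change (ppQ (S (S m)) j) with (padd (ppQ (S m) (S j)) (pmul [0%Q; qa j] (ppQ m (S (S j))))).
    rewrite evQ_padd, evQ_pmul, IH1, IH2. simpl. rewrite acoef_qa, Q2R0. ring.
Qed.

Lemma pp_evQ x m j : pp x m j = evQ (ppQ m j) x.
Proof. apply (proj1 (pp_evQ2 x m)). Qed.

Definition PkQ (k : nat) : list Q :=
  match k with S (S k') => ppQ (S k') 2 | _ => [1%Q] end.
Definition QkQ (k : nat) : list Q :=
  match k with S (S k') => ppQ k' 3 | _ => [1%Q] end.

Lemma Pk_evQ k x : Pk k x = evQ (PkQ k) x.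
Proof.
  destruct k as [|[|k]]; try (cbn [Pk PkQ evQ]; rewrite Q2R1; ring). apply pp_evQ.
Qed.
Lemma Qk_evQ k x : Qk k x = evQ (QkQ k) x.
Proof.
  destruct k as [|[|k]]; try (cbn [Qk QkQ evQ]; rewrite Q2R1; ring). apply pp_evQ.
Qed.

Definition poly_id (k : nat) : Prop := forall x,
  peval (0 :: Stail) x * Pk k x - acoef 1 * x * Qk k x
  = x ^ (k + 1) * (Ccoef k * Pk k x + x * peval (Ml k) x).

Definition checkQ (k : nat) : bool :=
  pequiv (padd (pmul (0%Q :: StailQ) (PkQ k)) (pscale (-(1#2))%Q (pmul [0%Q; 1%Q] (QkQ k))))
         (pmul (xpow (k + 1)) (padd (pscale (qC k) (PkQ k)) (pmul [0%Q; 1%Q] (MlQ k)))).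

Lemma poly_id_of_check k : Ccoef k = Q2R (qC k) -> checkQ k = true -> poly_id k.
Proof.
  intros HC H x. apply (pequiv_sound _ _ x) in H.
  rewrite !evQ_padd, !evQ_pmul, !evQ_pscale, evQ_xpow, evQ_padd, evQ_pmul, evQ_pscale in H.
  unfold Stail, Ml.
  change (peval (0 :: map Q2R StailQ) x) with (0 + x * peval (map Q2R StailQ) x).
  rewrite !peval_map, Pk_evQ, Qk_evQ, HC, acoef_qa.
  rewrite evQ_pmul in H. cbn [evQ] in H. rewrite !Q2R0, !Q2R1 in H.
  replace (Q2R (- (1#2))) with (- Q2R (qa 1)) in H by (unfold Q2R; simpl; field).
  eapply eq_trans; [|eapply eq_trans; [exact H|]]; cbn [evQ]; rewrite ?Q2R0, ?Q2R1; ring.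
Qed.

Lemma poly_ids k : (1 <= k)%nat -> (k <= 13)%nat -> poly_id k.
Proof.
  intros H1 H2.
  do 14 (destruct k as [|k];
    [ first [ lia | apply poly_id_of_check;
      [unfold Q2R; cbn [Ccoef qC Qnum Qden]; field | vm_compute; reflexivity] ] | ]).
  lia.
Qed.

Definition StailR : list R := [(1/2); (-(1/12)); 0; (1/120); 0; (-(1/252)); 0; (1/240); 0; (-(1/132)); 0; (691/32760); 0; (-(1/12))].

Lemma Stail_eq : Stail = StailR.
Proof.
  unfold Stail, StailQ, StailR. cbn [map].
  repeat (apply f_equal2; [unfold Q2R; cbn [Qnum Qden]; field|]). reflexivity.
Qed.

Fixpoint Tln (N : nat) (x : R) : R :=
  match N with O => 0 | S N' => Tln N' x + (-1) ^ N' * x ^ (S N') / INR (S N') end.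

Lemma W_id x : 0 <= x ->
  Tln 16 x - x / (1 + x) - peval (0 :: Stail) x + peval (0 :: Stail) (x / (1 + x))
  = x ^ 16 * peval Wl x / (1 + x) ^ 14.
Proof.
  intros Hx. rewrite Stail_eq. simpl. field. lra.
Qed.

Lemma pabs_nonneg l : 0 <= pabs l.
Proof. induction l; simpl; [lra|]. pose proof (Rabs_pos a); lra. Qed.

Lemma peval_bound l x : 0 <= x <= 1 -> Rabs (peval l x) <= pabs l.
Proof.
  intros Hx; induction l as [|c l IH]; simpl.
  - rewrite Rabs_R0; lra.
  - eapply Rle_trans; [apply Rabs_triang|]. rewrite Rabs_mult.
    apply Rplus_le_compat_l. rewrite (Rabs_pos_eq x) by lra.
    pose proof (Rabs_pos (peval l x)). nra.
Qed.

Fixpoint Dln (N : nat) (x : R) : R :=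
  match N with O => 0 | S N' => Dln N' x + (-x) ^ N' end.

Lemma Tln_deriv N x : is_derive (Tln N) x (Dln N x).
Proof.
  induction N as [|N IH].
  - simpl. apply (is_derive_const 0).
  - assert (E : forall t : R, Tln N t + ((-1) ^ N / INR (S N)) * t ^ (S N) = Tln (S N) t).
    { intros t; cbn [Tln]. field. apply not_0_INR; lia. }
    apply is_derive_ext with
      (f := fun y => Tln N y + ((-1) ^ N / INR (S N)) * y ^ (S N)); [exact E|].
    replace (Dln (S N) x) with
      (Dln N x + ((-1) ^ N / INR (S N)) * (INR (S N) * 1 * x ^ Init.Nat.pred (S N))).
    + apply (is_derive_plus (Tln N) (fun y => ((-1) ^ N / INR (S N)) * y ^ (S N))).
      * exact IH.
      * apply is_derive_scal. exact (is_derive_pow (fun y => y) (S N) x 1 (is_derive_id x)).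
    + cbn [Dln]. simpl Init.Nat.pred.
      replace (-x) with ((-1) * x) by ring. rewrite Rpow_mult_distr.
      field. apply not_0_INR; lia.
Qed.

Lemma Dln_eq N x : Dln N x * (1 + x) = 1 - (-x) ^ N.
Proof.
  induction N as [|N IH]; simpl. ring.
  rewrite Rmult_plus_distr_r, IH. ring.
Qed.

Lemma Tln0 N : Tln N 0 = 0.
Proof. induction N as [|N IH]; simpl. reflexivity. rewrite IH. unfold Rdiv. ring. Qed.

Lemma ln_taylor N x : 0 <= x <= 1 -> Rabs (ln (1 + x) - Tln N x) <= x ^ (S N).
Proof.
  intros Hx.
  set (h := fun t => ln (1 + t) - Tln N t).
  assert (Hd : forall t, 0 <= t -> is_derive h t (/ (1 + t) - Dln N t)).
  { intros t Ht. unfold h.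
    apply (is_derive_minus (fun t => ln (1 + t)) (Tln N)).
    - auto_derive. lra. field. lra.
    - apply Tln_deriv. }
  destruct (MVT_gen h 0 x (fun t => / (1 + t) - Dln N t)) as [c [Hc Heq]].
  { intros t Ht. rewrite Rmin_left in Ht by lra. apply Hd. lra. }
  { intros t Ht. rewrite Rmin_left in Ht by lra. apply derivable_continuous_pt, ex_derive_Reals_0.
    eexists. apply Hd. lra. }
  rewrite Rmin_left, Rmax_right in Hc by lra.
  change (Rabs (h x) <= x ^ S N).
  replace (h x) with (h x - h 0) by (unfold h; rewrite Tln0, Rplus_0_r, ln_1; ring).
  rewrite Heq.
  assert (E : / (1 + c) - Dln N c = (- c) ^ N / (1 + c)).
  { pose proof (Dln_eq N c). field_simplify_eq; [|lra]. lra. }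
  rewrite E, Rabs_mult, Rminus_0_r, (Rabs_pos_eq x) by lra.
  rewrite Rabs_div by lra. rewrite <- RPow_abs, Rabs_Ropp, (Rabs_pos_eq c) by lra.
  rewrite (Rabs_pos_eq (1 + c)) by lra.
  simpl (x ^ S N). rewrite (Rmult_comm x).
  apply Rmult_le_compat_r; [lra|].
  apply Rle_trans with (c ^ N).
  - unfold Rdiv. pose proof (pow_le c N ltac:(lra)).
    rewrite <- (Rmult_1_r (c ^ N)) at 2. apply Rmult_le_compat_l; [lra|].
    rewrite <- Rinv_1. apply Rinv_le_contravar; lra.
  - apply pow_incr; lra.
Qed.

Fixpoint Ux (x : R) (m j : nat) : R :=
  match m with
  | O => 1 + acoef j * x
  | S m' => 1 + acoef j * x / Ux x m' (S j)
  end.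

Lemma acoef_bound j : -2 <= acoef j <= 2.
Proof.
  do 14 (destruct j as [|j]; [cbn [acoef]; lra|]). cbn [acoef]; lra.
Qed.

Lemma Ux_bound x m j : 0 <= x <= 1/8 -> 1/2 <= Ux x m j <= 3/2.
Proof.
  intros Hx. revert j. induction m as [|m IH]; intros j; simpl.
  - pose proof (acoef_bound j). nra.
  - pose proof (acoef_bound j). destruct (IH (S j)) as [H1 H2].
    set (U := Ux x m (S j)) in *.
    set (q := acoef j * x / U).
    assert (Hq : q * U = acoef j * x) by (unfold q; field; lra).
    assert (-1/4 <= acoef j * x <= 1/4) by nra.
    assert (-1/2 <= q <= 1/2) by nra. lra.
Qed.

Lemma pp_Ux x m j : 0 <= x <= 1/8 -> pp x (S m) j = Ux x m j * pp x m (S j).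
Proof.
  intros Hx. revert j. induction m as [|m IH]; intros j.
  - simpl. ring.
  - change (pp x (S (S m)) j) with (pp x (S m) (S j) + acoef j * x * pp x m (S (S j))).
    rewrite IH. cbn [Ux]. pose proof (Ux_bound x m (S j) Hx). field. lra.
Qed.

Lemma pp_pos x m j : 0 <= x <= 1/8 -> (/2) ^ m <= pp x m j.
Proof.
  intros Hx. revert j. induction m as [|m IH]; intros j.
  - simpl. lra.
  - rewrite pp_Ux by exact Hx. simpl. pose proof (Ux_bound x m j Hx).
    pose proof (IH (S j)). pose proof (pow_le (/2) m ltac:(lra)).
    apply Rmult_le_compat; lra.
Qed.

Lemma inv_small y : 8 <= y -> 0 <= / y <= 1/8.
Proof.
  intros Hy. split. left; apply Rinv_0_lt_compat; lra.
  replace (1/8) with (/8) by field. apply Rinv_le_contravar; lra.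
Qed.

Lemma cf_Ux y m j : 8 <= y -> cf_tail y m j = y * Ux (/ y) m j.
Proof.
  intros Hy. pose proof (inv_small y Hy) as Hx. revert j.
  induction m as [|m IH]; intros j; simpl.
  - field. lra.
  - rewrite IH. pose proof (Ux_bound (/y) m (S j) Hx). field. lra.
Qed.

Lemma Rk_eq k n : (1 <= k)%nat -> 8 <= INR n ->
  Rk k n = acoef 1 * / INR n * Qk k (/ INR n) / Pk k (/ INR n).
Proof.
  intros Hk Hn. pose proof (inv_small _ Hn) as Hx.
  destruct k as [|[|k]]; [lia| |].
  - cbn [Rk Qk Pk]. field. lra.
  - unfold Rk, Qk, Pk. rewrite cf_Ux by exact Hn. rewrite pp_Ux by exact Hx.
    pose proof (Ux_bound (/ INR n) k 2 Hx). pose proof (pp_pos (/ INR n) k 3 Hx).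
    pose proof (pow_lt (/2) k ltac:(lra)).
    field. lra.
Qed.

Lemma rat_step (y P q Sx M C a : R) (k : nat) : y <> 0 -> P <> 0 ->
  Sx * P - a * / y * q = (/ y) ^ (k + 1) * (C * P + / y * M) ->
  y ^ (k + 1) * (Sx - a * / y * q / P) = C + / y * M / P.
Proof.
  intros Hy HP H.
  replace (Sx - a * / y * q / P) with ((Sx * P - a * / y * q) / P) by (field; auto).
  rewrite H, pow_inv. assert (Hu : y ^ (k + 1) <> 0) by (apply pow_nonzero; auto).
  set (u := y ^ (k + 1)) in *. field. auto.
Qed.

Definition Sx (n : nat) : R := peval (0 :: Stail) (/ INR n).

Lemma rat_part k : (1 <= k)%nat -> (k <= 13)%nat ->
  forall n, (8 <= n)%nat ->
  Rabs (INR n ^ (k + 1) * (Sx n - Rk k n) - Ccoef k) <= pabs (Ml k) * 2 ^ 12 / INR n.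
Proof.
  intros Hk1 Hk2 n Hn.
  assert (Hy : 8 <= INR n) by (replace 8 with (INR 8) by (simpl; ring); apply le_INR; lia).
  pose proof (inv_small _ Hy) as Hx.
  assert (HP : (/ 2) ^ 12 <= Pk k (/ INR n)).
  { destruct k as [|[|k]]; [lia| |].
    - simpl Pk. rewrite pow_inv. rewrite <- Rinv_1. apply Rinv_le_contravar. lra.
      pose proof (Rle_pow 2 0 12 ltac:(lra) ltac:(lia)). simpl in H. lra.
    - unfold Pk. eapply Rle_trans; [|apply pp_pos; exact Hx].
      rewrite !pow_inv. apply Rinv_le_contravar. apply pow_lt; lra.
      apply Rle_pow; [lra|lia]. }
  assert (HP0 : 0 < (/2) ^ 12) by (apply pow_lt; lra).
  unfold Sx. rewrite Rk_eq by (auto; lra).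
  rewrite (rat_step (INR n) (Pk k (/ INR n)) (Qk k (/ INR n)) _ (peval (Ml k) (/ INR n)) (Ccoef k)).
  - replace (Ccoef k + / INR n * peval (Ml k) (/ INR n) / Pk k (/ INR n) - Ccoef k)
      with (/ INR n * (peval (Ml k) (/ INR n) / Pk k (/ INR n))) by (unfold Rdiv; ring).
    rewrite Rabs_mult, Rabs_pos_eq by lra. rewrite Rmult_comm. unfold Rdiv at 2.
    rewrite Rabs_div by lra. rewrite (Rabs_pos_eq (Pk _ _)) by lra.
    apply Rmult_le_compat_r; [lra|].
    pose proof (peval_bound (Ml k) (/ INR n) ltac:(lra)).
    unfold Rdiv. apply Rmult_le_compat; try lra.
    + apply Rabs_pos.
    + left; apply Rinv_0_lt_compat; lra.
    + replace (2 ^ 12) with (/ (/ 2) ^ 12) by (rewrite pow_inv; field; apply pow_nonzero; lra).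
      apply Rinv_le_contravar; lra.
  - lra.
  - lra.
  - apply (poly_ids k Hk1 Hk2).
Qed.

Lemma lim_inv_n : is_lim_seq (fun n => / INR n) 0.
Proof.
  pose proof (is_lim_seq_inv _ _ is_lim_seq_INR) as H.
  simpl in H. apply H. discriminate.
Qed.

Lemma lim_of_bound (u : nat -> R) (l B : R) (N0 : nat) :
  (forall n, (N0 <= n)%nat -> Rabs (u n - l) <= B / INR n) -> is_lim_seq u l.
Proof.
  intros H.
  assert (HB : is_lim_seq (fun n => B * / INR n) 0).
  { replace (Finite 0) with (Rbar_mult B 0) by (simpl; f_equal; ring).
    apply is_lim_seq_scal_l, lim_inv_n. }
  apply is_lim_seq_le_le_loc with (u := fun n => l - B * / INR n) (w := fun n => l + B * / INR n).
  - exists N0. intros n Hn. specialize (H n Hn). apply Rabs_le_between' in H.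
    unfold Rdiv in H. lra.
  - replace (Finite l) with (Finite (l - 0)) by (f_equal; ring).
    apply is_lim_seq_minus'; [apply is_lim_seq_const|exact HB].
  - replace (Finite l) with (Finite (l + 0)) by (f_equal; ring).
    apply is_lim_seq_plus'; [apply is_lim_seq_const|exact HB].
Qed.

Lemma INR_ge1 n : (1 <= n)%nat -> 1 <= INR n.
Proof. intros H. replace 1 with (INR 1) by reflexivity. apply le_INR; exact H. Qed.

Lemma inv_le1 n : (1 <= n)%nat -> 0 < / INR n <= 1.
Proof.
  intros H. pose proof (INR_ge1 n H). split. apply Rinv_0_lt_compat; lra.
  rewrite <- Rinv_1. apply Rinv_le_contravar; lra.
Qed.

Lemma Sx_lim : is_lim_seq Sx 0.
Proof.
  apply (lim_of_bound _ _ (pabs Stail) 1). intros n Hn.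
  pose proof (inv_le1 n Hn). unfold Sx. cbn [peval].
  rewrite Rminus_0_r, Rplus_0_l, Rabs_mult, (Rabs_pos_eq (/ INR n)) by lra.
  pose proof (peval_bound Stail (/ INR n) ltac:(lra)).
  unfold Rdiv. rewrite Rmult_comm. apply Rmult_le_compat_r; lra.
Qed.

Definition KW : R := 1 + pabs Wl.

Lemma KW_pos : 1 <= KW.
Proof. unfold KW. pose proof (pabs_nonneg Wl). lra. Qed.

Section G.
Variable gamma : R.
Definition gg (n : nat) : R := harmonic n - ln (INR n) - gamma - Sx n.

Lemma g_step n : (1 <= n)%nat ->
  gg n - gg (S n) = (ln (1 + / INR n) - Tln 16 (/ INR n))
     + (/ INR n) ^ 16 * peval Wl (/ INR n) / (1 + / INR n) ^ 14.
Proof.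
  intros Hn. pose proof (INR_ge1 n Hn) as Hy. pose proof (inv_le1 n Hn) as Hx.
  rewrite <- W_id by lra.
  unfold gg, Sx. change (harmonic (S n)) with (harmonic n + / INR (S n)).
  rewrite S_INR.
  replace (INR n + 1) with (INR n * (1 + / INR n)) by (field; lra).
  rewrite ln_mult by lra.
  replace (/ (INR n * (1 + / INR n))) with (/ INR n / (1 + / INR n)) by (field; lra).
  ring.
Qed.

Lemma g_step_bound n : (1 <= n)%nat -> Rabs (gg n - gg (S n)) <= KW * (/ INR n) ^ 16.
Proof.
  intros Hn. pose proof (inv_le1 n Hn) as Hx. rewrite g_step by exact Hn.
  set (x := / INR n) in *.
  eapply Rle_trans; [apply Rabs_triang|].
  pose proof (ln_taylor 16 x ltac:(lra)) as H1.
  assert (H2 : x ^ 17 <= x ^ 16).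
  { change (x ^ 17) with (x * x ^ 16). pose proof (pow_le x 16 ltac:(lra)). nra. }
  assert (H3 : Rabs (x ^ 16 * peval Wl x / (1 + x) ^ 14) <= x ^ 16 * pabs Wl).
  { pose proof (pow_le x 16 ltac:(lra)).
    assert (H1x : 1 <= (1 + x) ^ 14).
    { pose proof (Rle_pow (1 + x) 0 14 ltac:(lra) ltac:(lia)). simpl in H0. lra. }
    unfold Rdiv. rewrite !Rabs_mult, (Rabs_pos_eq (x ^ 16)) by lra.
    rewrite Rabs_inv, (Rabs_pos_eq ((1 + x) ^ 14)) by lra.
    pose proof (peval_bound Wl x ltac:(lra)).
    assert (/ (1 + x) ^ 14 <= 1) by (rewrite <- Rinv_1; apply Rinv_le_contravar; lra).
    assert (0 < / (1 + x) ^ 14) by (apply Rinv_0_lt_compat; lra).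
    pose proof (Rabs_pos (peval Wl x)).
    rewrite Rmult_assoc. apply Rmult_le_compat_l; [lra|]. nra. }
  unfold KW. lra.
Qed.

Lemma aux_ineq (a m : R) : 1 <= a <= m -> (/ m) ^ 16 <= 2 / a ^ 14 * (/ m - / (m + 1)).
Proof.
  intros H.
  assert (Ha : a ^ 14 <= m ^ 14) by (apply pow_incr; lra).
  assert (Ha0 : 0 < a ^ 14) by (apply pow_lt; lra).
  replace (2 / a ^ 14 * (/ m - / (m + 1))) with (/ (a ^ 14 * (m * (m + 1) / 2)))
    by (field; split; lra).
  replace ((/ m) ^ 16) with (/ (m ^ 14 * m ^ 2)) by (rewrite pow_inv; f_equal; ring).
  apply Rinv_le_contravar.
  - apply Rmult_lt_0_compat; [lra|]. nra.
  - apply Rmult_le_compat; try lra. nra. simpl. nra.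
Qed.

Lemma g_tail n N : (1 <= n)%nat ->
  Rabs (gg n - gg (n + N)) <= 2 * KW / INR n ^ 14 * (/ INR n - / INR (n + N)).
Proof.
  intros Hn. pose proof (INR_ge1 n Hn) as Hy. pose proof KW_pos.
  induction N as [|N IH].
  - rewrite Nat.add_0_r, !Rminus_diag, Rabs_R0, Rmult_0_r. lra.
  - rewrite Nat.add_succ_r.
    replace (gg n - gg (S (n + N))) with ((gg n - gg (n + N)) + (gg (n + N) - gg (S (n + N)))) by ring.
    eapply Rle_trans; [apply Rabs_triang|].
    pose proof (g_step_bound (n + N) ltac:(lia)).
    assert (Hm : INR n <= INR (n + N)) by (apply le_INR; lia).
    pose proof (aux_ineq (INR n) (INR (n + N)) ltac:(lra)).
    rewrite S_INR.
    assert (KW * (/ INR (n + N)) ^ 16 <= KW * (2 / INR n ^ 14 * (/ INR (n + N) - / (INR (n + N) + 1))))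
      by (apply Rmult_le_compat_l; lra).
    replace (2 * KW / INR n ^ 14 * (/ INR n - / (INR (n + N) + 1))) with
      (2 * KW / INR n ^ 14 * (/ INR n - / INR (n + N)) +
       KW * (2 / INR n ^ 14 * (/ INR (n + N) - / (INR (n + N) + 1))))
      by (field; repeat split; lra).
    lra.
Qed.

Hypothesis Hgamma : is_lim_seq (fun n : nat => harmonic n - ln (INR n)) gamma.

Lemma g_lim : is_lim_seq gg 0.
Proof.
  assert (H : is_lim_seq (fun n => harmonic n - ln (INR n) - gamma - Sx n) (gamma - gamma - 0)).
  { apply is_lim_seq_minus'; [|exact Sx_lim].
    apply is_lim_seq_minus'; [exact Hgamma|apply is_lim_seq_const]. }
  replace (gamma - gamma - 0) with 0 in H by ring. exact H.
Qed.

Lemma g_bound n : (1 <= n)%nat -> Rabs (gg n) <= 2 * KW / INR n ^ 15.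
Proof.
  intros Hn. pose proof (INR_ge1 n Hn) as Hy. pose proof KW_pos.
  assert (Hl : is_lim_seq (fun N => Rabs (gg n - gg (N + n))) (Rabs (gg n - 0))).
  { apply (is_lim_seq_abs _ (Finite (gg n - 0))).
    apply is_lim_seq_minus'; [apply is_lim_seq_const|].
    apply (is_lim_seq_incr_n gg n 0). exact g_lim. }
  assert (Hb : forall N, Rabs (gg n - gg (N + n)) <= 2 * KW / INR n ^ 15).
  { intros N. rewrite Nat.add_comm. eapply Rle_trans; [apply g_tail; exact Hn|].
    assert (0 < / INR (n + N)) by (apply Rinv_0_lt_compat; pose proof (INR_ge1 (n+N) ltac:(lia)); lra).
    assert (0 < 2 * KW / INR n ^ 14) by (unfold Rdiv; apply Rmult_lt_0_compat; [lra|apply Rinv_0_lt_compat, pow_lt; lra]).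
    replace (2 * KW / INR n ^ 15) with (2 * KW / INR n ^ 14 * / INR n)
      by (simpl; field; lra).
    apply Rmult_le_compat_l; lra. }
  pose proof (is_lim_seq_le _ _ _ _ Hb Hl (is_lim_seq_const _)) as H1.
  simpl in H1. rewrite Rminus_0_r in H1. exact H1.
Qed.
End G.

Theorem theorem1 (gamma : R)
  (Hgamma : is_lim_seq (fun n : nat => harmonic n - ln (INR n)) gamma)
  (k : nat) (Hk1 : (1 <= k)%nat) (Hk2 : (k <= 13)%nat) :
  is_lim_seq (fun n : nat => INR n ^ (k + 1) * (rk k n - gamma)) (Ccoef k).
Proof.
  apply (lim_of_bound _ _ (pabs (Ml k) * 2 ^ 12 + 2 * KW) 8).
  intros n Hn.
  pose proof (rat_part k Hk1 Hk2 n Hn) as H1.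
  pose proof (g_bound gamma Hgamma n ltac:(lia)) as H2.
  pose proof (INR_ge1 n ltac:(lia)) as Hy. pose proof KW_pos.
  replace (INR n ^ (k + 1) * (rk k n - gamma) - Ccoef k) with
    ((INR n ^ (k + 1) * (Sx n - Rk k n) - Ccoef k) + INR n ^ (k + 1) * gg gamma n)
    by (unfold gg, rk; ring).
  eapply Rle_trans; [apply Rabs_triang|].
  assert (H3 : Rabs (INR n ^ (k + 1) * gg gamma n) <= 2 * KW / INR n).
  { rewrite Rabs_mult, (Rabs_pos_eq (INR n ^ (k + 1))) by (apply pow_le; lra).
    assert (Hp : INR n ^ (k + 1) <= INR n ^ 14) by (apply Rle_pow; [lra|lia]).
    eapply Rle_trans.
    { apply Rmult_le_compat; [apply pow_le; lra|apply Rabs_pos|exact Hp|exact H2]. }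
    right. simpl. field. lra. }
  unfold Rdiv in *. rewrite Rmult_plus_distr_r. lra.
Qed.
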